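(* There is an absolute constant $C$ such that for every $n\ge 2$ there exists an $n\times n$ matrix $A$ over $GF(2)$ such that the map $\phi(x)=Ax$ is a mapping from ${\sf Dictator}$ to ${\sf XOR}$ on $\{0,1\}^n$, every output bit of $\phi$ depends on at most $3$ input bits, $\phi$ is $2$-Lipschitz, and $\phi^{-1}$ is $C\log n$-Lipschitz.
   Context: ${\sf Dictator}(x)=x_1$ and ${\sf XOR}(x)=\sum_{i=1}^n x_i \bmod 2$ on $\{0,1\}^n$. A mapping from $f$ to $g$ is a bijection $\psi$ of $\{0,1\}^n$ with $f(z)=g(\psi(z))$ for all $z$. A map is $L$-Lipschitz if it increases Hamming distances by a factor at most $L$. An output bit depends on at most $3$ input bits means it is a function of some fixed set of at most $3$ input coordinates. *)

(* Defs.v *)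
From Stdlib Require Import Reals.
From HB Require Import structures.
From mathcomp Require Import all_boot all_order all_algebra.

Set Implicit Arguments.
Unset Strict Implicit.
Unset Printing Implicit Defensive.

Definition cube (n : nat) := 'cV['F_2]_n.

(* Dictator(x) = x_1, the first coordinate (index 0 in 'I_n). *)
Definition dictator (n : nat) (x : cube n) : 'F_2 :=
  (\sum_(i < n | nat_of_ord i == O) x i ord0)%R.

Definition xor_fun (n : nat) (x : cube n) : 'F_2 := (\sum_(i < n) x i ord0)%R.

Definition hamming (n : nat) (x y : cube n) : nat := #|[set i : 'I_n | x i ord0 != y i ord0]|.

Definition lipschitz (n : nat) (L : R) (f : cube n -> cube n) : Prop :=
  forall x y : cube n, Rle (INR (hamming (f x) (f y))) (Rmult L (INR (hamming x y))).

Definition local (n k : nat) (f : cube n -> cube n) : Prop :=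
  forall i : 'I_n, exists S : {set 'I_n}, (#|S| <= k)%nat /\
    forall x y : cube n, (forall j, j \in S -> x j ord0 = y j ord0) -> f x i ord0 = f y i ord0.

Definition mapping (n : nat) (f g : cube n -> 'F_2) (psi : cube n -> cube n) : Prop :=
  bijective psi /\ forall z, f z = g (psi z).

(* Main.v *)
Require Import Defs.
From Stdlib Require Import Reals Lra.
From HB Require Import structures.
From mathcomp Require Import all_boot all_order all_algebra.
From mathcomp Require Import zify.

Section Helpers.
Set Implicit Arguments. Unset Strict Implicit. Unset Printing Implicit Defensive.
Import GRing.Theory.


Definition anc (a w : nat) : Prop := exists k, w %/ 2 ^ k = a.
Definition ancb (K a w : nat) : bool := [exists k : 'I_K, w %/ 2 ^ k == a].

Lemma ancbP n a w : 0 < a -> w <= n ->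
  reflect (anc a w) (ancb (trunc_log 2 n).+1 a w).
Proof.
move=> a0 wn; apply: (iffP existsP).
  by case=> k /eqP <-; exists (val k).
case=> k hk.
have kK : k < (trunc_log 2 n).+1.
  rewrite ltnNge; apply/negP => hle.
  have : w < 2 ^ k.
    apply: (leq_ltn_trans wn); apply: (leq_trans (trunc_log_ltn n (isT : 1 < 2))).
    exact: leq_pexp2l.
  by move/divn_small; rewrite hk => h; rewrite h in a0.
by exists (Ordinal kK); rewrite /= hk.
Qed.

Lemma anc_refl w : anc w w.
Proof. by exists 0; rewrite expn0 divn1. Qed.

Lemma anc_le a w : anc a w -> a <= w.
Proof. by case=> k <-; apply: leq_div. Qed.

Lemma anc_up b a w : anc b w -> b %/ 2 = a -> anc a w.
Proof. by case=> k hk hb; exists k.+1; rewrite expnSr divnMA hk. Qed.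

Lemma anc_down a w : anc a w -> a <> w -> exists b, anc b w /\ b %/ 2 = a.
Proof.
case=> [[|k] hk] haw; first by rewrite expn0 divn1 in hk; case: haw.
exists (w %/ 2 ^ k); split; first by exists k.
by rewrite -divnMA -expnSr.
Qed.

Lemma anc_uniq a b c w : 0 < a -> anc b w -> anc c w -> b %/ 2 = a -> c %/ 2 = a -> b = c.
Proof.
move=> a0 hb hc hba hca.
wlog: b c hb hc hba hca / b <= c.
  move=> H; case: (leqP b c) => h; first exact: H.
  by apply/esym/H => //; apply: ltnW.
move=> _.
case: hb => k1 hk1; case: hc => k2 hk2.
case: (ltngtP k1 k2) => hk.
- exfalso.
  have e : 2 ^ k2 = 2 ^ k1 * 2 ^ (k2 - k1) by rewrite -expnD subnKC // ltnW.
  have : c <= a.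
    rewrite -hk2 e divnMA hk1 -hba; apply: leq_div2l => //.
    by rewrite -{1}(expn1 2); apply: leq_pexp2l; rewrite // subn_gt0.
  have : 2 * a <= c by rewrite -hca mulnC leq_trunc_div.
  lia.
- exfalso.
  have e : 2 ^ k1 = 2 ^ k2 * 2 ^ (k1 - k2) by rewrite -expnD subnKC // ltnW.
  have : b <= a.
    rewrite -hk1 e divnMA hk2 -hca; apply: leq_div2l => //.
    by rewrite -{1}(expn1 2); apply: leq_pexp2l; rewrite // subn_gt0.
  have : 2 * a <= b by rewrite -hba mulnC leq_trunc_div.
  lia.
- by rewrite -hk1 -hk2 hk.
Qed.

Local Open Scope ring_scope.

Lemma F2_11 : (1 + 1 : 'F_2) = 0. Proof. exact: val_inj. Qed.

Lemma sum_ind n (P : 'I_n -> bool) i0 : P i0 -> (forall i, P i -> i = i0) ->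
  \sum_i ((P i)%:R : 'F_2) = 1.
Proof.
move=> h0 hu; rewrite (bigD1 i0) //= h0 big1 ?addr0 // => i hi.
by case hP: (P i) => //; move: hi; rewrite (hu _ hP) eqxx ?andbF.
Qed.

Lemma sum_ind0 n (P : 'I_n -> bool) : (forall i, ~~ P i) -> \sum_i ((P i)%:R : 'F_2) = 0.
Proof. by move=> h; rewrite big1 // => i _; rewrite (negbTE (h i)). Qed.

Lemma card_eq_nat n c : (#|[set j : 'I_n | j == c :> nat]| <= 1)%N.
Proof.
apply/card_le1_eqP => x y; rewrite !inE => /eqP hx /eqP hy; apply: val_inj.
by rewrite /= hx hy.
Qed.

Lemma ham_lin n (M : 'M['F_2]_n) L : (forall j, #|[set i | M i j != 0%R]| <= L)%N ->
  forall x y : cube n, (hamming (M *m x) (M *m y) <= L * hamming x y)%N.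
Proof.
move=> hL x y; rewrite /hamming.
set z := x - y.
have hz : forall i, (x i ord0 != y i ord0) = (z i ord0 != 0) by move=> i; rewrite /z !mxE subr_eq0.
have hMz : forall i, ((M *m x) i ord0 != (M *m y) i ord0) = ((M *m z) i ord0 != 0).
  by move=> i; rewrite /z mulmxBr !mxE subr_eq0.
have -> : [set i | (M *m x) i ord0 != (M *m y) i ord0] = [set i | (M *m z) i ord0 != 0] by apply/setP => i; rewrite !inE hMz.
have -> : [set i | x i ord0 != y i ord0] = [set i | z i ord0 != 0] by apply/setP => i; rewrite !inE hz.
apply: (@leq_trans (\sum_i \sum_(j | z j ord0 != 0%R) (M i j != 0%R : nat))%N).
  rewrite -sum1dep_card big_mkcond /=; apply: leq_sum => i _.
  case: ifP => // hi.
  case: (pickP (fun j => M i j * z j ord0 != 0)) => [j hj | none].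
    move: (hj); rewrite mulf_eq0 negb_or => /andP [hM hzj].
    by rewrite (bigD1 j) //= hM.
  move: hi; rewrite mxE big1 ?eqxx // => j _.
  by move: (none j) => /= /negbFE /eqP.
rewrite exchange_big /= -sum1dep_card big_distrr /=; apply: leq_sum => j _.
rewrite muln1; apply: leq_trans (hL j); rewrite -sum1dep_card [leqRHS]big_mkcond /=.
by apply: leq_sum => i _; case: (M i j != 0%R).
Qed.

Lemma local_lin n (M : 'M['F_2]_n) k : (forall i, #|[set j | M i j != 0%R]| <= k)%N ->
  local k (fun x => M *m x).
Proof.
move=> hk i; exists [set j | M i j != 0]; split => // x y hxy.
rewrite !mxE; apply: eq_bigr => j _.
case: (eqVneq (M i j) 0) => [->|h]; first by rewrite !mul0r.
by rewrite hxy // inE.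
Qed.

Definition Amx n : 'M['F_2]_n :=
  \matrix_(i, j) (((i : nat) == j)%:R + ((j.+1 %/ 2)%N == i.+1)%:R).

Lemma Amx_nz n (i j : 'I_n) : Amx n i j != 0 -> ((i : nat) == j) || ((j.+1 %/ 2)%N == i.+1).
Proof. rewrite mxE orbC; case: ((j.+1 %/ 2)%N == i.+1) => //; case: ((i:nat) == j) => //. Qed.

Lemma Amx_row n (i : 'I_n) : (#|[set j | Amx n i j != 0%R]| <= 3)%N.
Proof.
apply: (@leq_trans #|[set j : 'I_n | j == i :> nat] :|: [set j : 'I_n | j == (2 * i + 1)%N :> nat]
   :|: [set j : 'I_n | j == (2 * i + 2)%N :> nat]|).
  apply: subset_leq_card; apply/subsetP => j; rewrite !inE => /Amx_nz.
  case/orP => [/eqP h|/eqP h]; first by rewrite h eqxx.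
  have [e|e] : (j:nat) = (2*i+1)%N \/ (j:nat) = (2*i+2)%N by lia.
    by rewrite e eqxx orbT.
  by rewrite e eqxx !orbT.
apply: (leq_trans (leq_card_setU _ _)).
rewrite -[3%N]/(2 + 1)%N; apply: leq_add; last exact: card_eq_nat.
apply: (leq_trans (leq_card_setU _ _)).
by rewrite -[2%N]/(1 + 1)%N; apply: leq_add; exact: card_eq_nat.
Qed.

Lemma Amx_col n (j : 'I_n) : (#|[set i | Amx n i j != 0%R]| <= 2)%N.
Proof.
apply: (@leq_trans #|[set i : 'I_n | i == j :> nat] :|: [set i : 'I_n | i == (j.+1 %/ 2).-1 :> nat]|).
  apply: subset_leq_card; apply/subsetP => i; rewrite !inE => /Amx_nz.
  case/orP => [/eqP h|/eqP h]; first by rewrite h eqxx.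
  have e : (i:nat) = (j.+1 %/ 2).-1 by lia.
  by rewrite e eqxx orbT.
apply: (leq_trans (leq_card_setU _ _)).
by rewrite -[2%N]/(1 + 1)%N; apply: leq_add; exact: card_eq_nat.
Qed.

Lemma Amx_colsum n (j : 'I_n) : \sum_i Amx n i j = ((j : nat) == 0%N)%:R.
Proof.
rewrite (eq_bigr (fun i : 'I_n => (((i : nat) == j)%:R + ((j.+1 %/ 2)%N == i.+1)%:R)));
  last by move=> i _; rewrite mxE.
rewrite big_split /= (@sum_ind _ (fun i : 'I_n => (i : nat) == j) j) //; last first.
  by move=> i /eqP h; apply: val_inj.
case: (eqVneq (j : nat) 0%N) => hj.
  by rewrite sum_ind0 ?addr0 // => i; rewrite hj.
have hp : ((j.+1 %/ 2).-1 < n)%N by have := ltn_ord j; lia.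
rewrite (@sum_ind _ (fun i : 'I_n => (j.+1 %/ 2)%N == i.+1) (Ordinal hp)) ?F2_11 //=.
  by apply/eqP; lia.
by move=> i /eqP h; apply: val_inj => /=; lia.
Qed.

Lemma Amx_dict n (z : cube n) : dictator z = xor_fun (Amx n *m z).
Proof.
rewrite /xor_fun /dictator.
rewrite [RHS](eq_bigr (fun i : 'I_n => \sum_j Amx n i j * z j ord0)); last by move=> i _; rewrite mxE.
rewrite [RHS]exchange_big /=.
rewrite [RHS](eq_bigr (fun j : 'I_n => ((j : nat) == 0%N)%:R * z j ord0)); last first.
  by move=> j _; rewrite -mulr_suml Amx_colsum.
rewrite [LHS]big_mkcond /=; apply: eq_bigr => j _.
by case: ((j : nat) == 0%N); rewrite ?mul1r ?mul0r.
Qed.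

Definition Bmx n : 'M['F_2]_n :=
  \matrix_(j, v) (ancb (trunc_log 2 n).+1 j.+1 v.+1)%:R.

Lemma Bmx_col n (v : 'I_n) : (#|[set j | Bmx n j v != 0%R]| <= (trunc_log 2 n).+1)%N.
Proof.
set K := (trunc_log 2 n).+1.
pose f (k : 'I_K) : 'I_n := insubd v ((v.+1 %/ 2 ^ k).-1).
apply: (@leq_trans #|f @: [set: 'I_K]|); last by rewrite (leq_trans (leq_imset_card _ _)) // cardsT card_ord.
apply: subset_leq_card; apply/subsetP => j; rewrite inE mxE.
case: (ancb _ _ _) /existsP => [[k /eqP hk] _|]; last by rewrite eqxx.
apply/imsetP; exists k; first by rewrite inE.
by apply: val_inj; rewrite /f val_insubd hk /= ltn_ord.
Qed.

Lemma mulF2b (x y : bool) : ((x%:R : 'F_2) * y%:R) = (x && y)%:R.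
Proof. by case: x; case: y; rewrite /= ?mulr1 ?mulr0. Qed.

Lemma Amx_Bmx n : Amx n *m Bmx n = 1%:M.
Proof.
apply/matrixP => i v; rewrite !mxE.
set K := (trunc_log 2 n).+1.
have hv : (v.+1 <= n)%N := ltn_ord v.
rewrite (eq_bigr (fun j : 'I_n => (((i : nat) == j) && ancb K j.+1 v.+1)%:R
   + (((j.+1 %/ 2)%N == i.+1) && ancb K j.+1 v.+1)%:R)); last first.
  by move=> j _; rewrite !mxE mulrDl !mulF2b.
rewrite big_split /=.
have -> : \sum_(j < n) ((((i : nat) == j) && ancb K j.+1 v.+1)%:R : 'F_2) = (ancb K i.+1 v.+1)%:R.
  case hb: (ancb K i.+1 v.+1).
    apply: (@sum_ind _ _ i); first by rewrite eqxx.
    by move=> j /andP [/eqP h _]; apply: val_inj.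
  by apply: sum_ind0 => j; apply/negP => /andP [/eqP h]; rewrite -h hb.
have -> : \sum_(j < n) ((((j.+1 %/ 2)%N == i.+1) && ancb K j.+1 v.+1)%:R : 'F_2)
    = ((ancb K i.+1 v.+1) && (i != v))%:R.
  case: (boolP ((ancb K i.+1 v.+1) && (i != v))) => [/andP [/(ancbP (ltn0Sn _) hv) ha hiv]|hn].
    have hne : (i.+1 <> v.+1)%N by move=> [] h; move: hiv; rewrite (_ : i = v) ?eqxx //; exact: val_inj.
    have [b [hb hb2]] := anc_down ha hne.
    have hbw := anc_le hb.
    have hb0 : (0 < b)%N by move: hb2; case: b {hb hbw} => //.
    have hj0 : (b.-1 < n)%N by lia.
    apply: (@sum_ind _ _ (Ordinal hj0)).
      rewrite /= prednK // hb2 eqxx /=; by apply/(ancbP hb0 hv).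
    move=> j /andP [/eqP hj /(ancbP (ltn0Sn _) hv) hja]; apply: val_inj => /=.
    by have := @anc_uniq i.+1 j.+1 b v.+1 (ltn0Sn _) hja hb hj hb2; lia.
  apply: sum_ind0 => j; apply/negP => /andP [/eqP hj /(ancbP (ltn0Sn _) hv) hja].
  move/negP: hn; apply; apply/andP; split.
    by apply/(ancbP (ltn0Sn _) hv); apply: anc_up hja hj.
  apply/negP => /eqP hiv; subst v.
  have := anc_le hja; have : (j.+1 %/ 2 < j.+1)%N by apply: ltn_Pdiv.
  rewrite hj; lia.
case: (eqVneq i v) => [->|hiv]; rewrite /= ?andbT ?andbF.
  have -> : ancb K v.+1 v.+1 by apply/(ancbP (ltn0Sn _) hv); exact: anc_refl.
  by rewrite addr0.
by case: (ancb K i.+1 v.+1); rewrite ?F2_11 ?addr0.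
Qed.

End Helpers.

Local Open Scope R_scope.
Definition C4 : R := 4.
Lemma K_bound n : (2 <= n)%N -> Rle (INR (trunc_log 2 n).+1) (C4 * ln (INR n)).
Proof.
move=> hn; rewrite /C4.
set t := trunc_log 2 n.
have t1 : (1 <= t)%N by apply: trunc_log_max; rewrite // expn1.
have t2 : (2 ^ t <= n)%N by apply: trunc_logP => //; lia.
have ht : (1 <= INR t) by apply: (le_INR 1); apply/leP.
have hp : (INR (2 ^ t) <= INR n) by apply: le_INR; apply/leP.
have ep : forall k, expn 2 k = Nat.pow 2 k by elim=> [|k IH] //; rewrite expnS IH.
rewrite ep pow_INR in hp.
have h2 : (0 < INR 2 ^ t) by apply: pow_lt; simpl; lra.
have hl : (ln (INR 2 ^ t) <= ln (INR n)).
  case: (Rle_lt_or_eq_dec _ _ hp) => h; last by rewrite h; lra.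
  by apply: Rlt_le; apply: ln_increasing.
rewrite ln_pow in hl; last by simpl; lra.
have l2 := ln_lt_2.
have e : INR 2 = 2 by simpl; lra.
rewrite e in hl.
have ht' : (0 <= INR t - 1) by lra.
have hq : 0 <= (INR t) * (ln 2 - / 2) by apply: Rmult_le_pos; lra.
rewrite S_INR; lra.
Qed.
Local Close Scope R_scope.


Theorem theorem2 :
  exists C : R, forall n : nat, (2 <= n)%nat ->
    exists A : 'M['F_2]_n,
      let phi := fun x : cube n => (A *m x)%R in
      mapping (@dictator n) (@xor_fun n) phi /\
      local 3 phi /\
      lipschitz (INR 2) phi /\
      (exists phiinv : cube n -> cube n,
          cancel phi phiinv /\ cancel phiinv phi /\
          lipschitz (Rmult C (ln (INR n))) phiinv).
Proof.
exists C4 => n hn; exists (Amx n) => phi.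
have AB := Amx_Bmx n.
have BA := mulmx1C AB.
have c1 : cancel phi (fun y => (Bmx n *m y)%R).
  by move=> x; rewrite /phi mulmxA BA mul1mx.
have c2 : cancel (fun y => (Bmx n *m y)%R) phi.
  by move=> x; rewrite /phi mulmxA AB mul1mx.
split; first by split; [exact: Bijective c1 c2 | exact: Amx_dict].
split; first exact: local_lin (@Amx_row n).
split.
  move=> x y; have := ham_lin (@Amx_col n) x y.
  by move/leP/le_INR; rewrite mult_INR.
exists (fun y => (Bmx n *m y)%R); split; first exact: c1.
split; first exact: c2.
move=> x y; have := ham_lin (@Bmx_col n) x y.
move/leP/le_INR; rewrite mult_INR => h.
apply: (Rle_trans _ _ _ h); apply: Rmult_le_compat_r; first exact: pos_INR.
exact: K_bound.
Qed.
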